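(* (1) The associative algebra $(\mathcal{H}_{\mathbb{T}},.)$ is freely generated by the set of indecomposable topologies. (2) The associative algebra $(\mathcal{H}_{\mathbb{T}},\downarrow)$ is freely generated by the set of $\downarrow$-indecomposable topologies. (3) The 2-associative algebra $(\mathcal{H}_{\mathbb{T}},.,\downarrow)$ is freely generated by the set of bi-indecomposable topologies, i.e. for every 2-associative algebra $(A,.,\downarrow)$ and every choice of elements $a_{\mathcal{T}}\in A$ indexed by the bi-indecomposable topologies $\mathcal{T}$, there is a unique linear map $\phi:\mathcal{H}_{\mathbb{T}}\to A$ sending $1$ to the unit of $A$, compatible with both products, and with $\phi(\mathcal{T})=a_{\mathcal{T}}$ for every bi-indecomposable $\mathcal{T}$.
   Context: Let $K$ be a field. For $n\geq0$, $[n]=\{1,\ldots,n\}$, $\mathbb{T}_n$ is the set of topologies on $[n]$, and $\mathcal{H}_{\mathbb{T}}$ is the $K$-vector space with basis $\bigsqcup_{n\ge0}\mathbb{T}_n$; the empty topology on $[0]$ is denoted $1$. For $O\subseteq\mathbb{N}$, $O(+n)=\{k+n\mid k\in O\}$. For $\mathcal{T}\in\mathbb{T}_n$, $\mathcal{T}'\in\mathbb{T}_{n'}$: $\mathcal{T}.\mathcal{T}'$ is the topology on $[n+n']$ with open sets $O\sqcup O'(+n)$ ($O\in\mathcal{T}$, $O'\in\mathcal{T}'$); $\mathcal{T}\downarrow\mathcal{T}'$ is the topology on $[n+n']$ with open sets $O\sqcup[n'](+n)$ ($O\in\mathcal{T}$) and $O'(+n)$ ($O'\in\mathcal{T}'$).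 Both products are extended bilinearly to $\mathcal{H}_{\mathbb{T}}$; they are associative with common unit $1$. A topology $\mathcal{T}\neq 1$ is indecomposable if it cannot be written $\mathcal{T}'.\mathcal{T}''$ with $\mathcal{T}',\mathcal{T}''\neq1$; $\downarrow$-indecomposable if it cannot be written $\mathcal{T}'\downarrow\mathcal{T}''$ with $\mathcal{T}',\mathcal{T}''\neq 1$; bi-indecomposable if it is both. A 2-associative algebra is a vector space with two associative products sharing the same unit; morphisms preserve both products and the unit. *)

(* Defs.v *)
From HB Require Import structures.
From mathcomp Require Import all_boot all_order all_algebra.
From mathcomp Require Import finmap.
From mathcomp.multinomials Require Import monalg.
Set Implicit Arguments. Unset Strict Implicit. Unset Printing Implicit Defensive.
Import GRing.Theory.
Local Open Scope ring_scope.

(* On a finite set, a topology is a family of subsets containing the empty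
   set and the whole set, closed under (finite = arbitrary) unions and finite
   intersections. *)
Definition is_topology n (T : {set {set 'I_n}}) : bool :=
  [&& set0 \in T, setT \in T &
      [forall O1 in T, forall O2 in T, (O1 :|: O2 \in T) && (O1 :&: O2 \in T)]].

Definition topo n := {T : {set {set 'I_n}} | is_topology T}.

Lemma indisc_is_topology n : is_topology [set set0; setT : {set 'I_n}].
Proof.
apply/and3P; split; rewrite ?inE ?eqxx ?orbT //.
apply/forallP=> O1; apply/implyP; rewrite !inE => /orP[]/eqP->;
apply/forallP=> O2; apply/implyP; rewrite !inE => /orP[]/eqP->;
by rewrite ?set0U ?setU0 ?setTU ?setUT ?set0I ?setI0 ?setIT ?setTI ?inE ?eqxx ?orbT.
Qed.

(* the indiscrete topology; on [0] it is the unique (empty) topology 1 *)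
Definition indisc n : topo n := exist (fun T => is_topology T) _ (indisc_is_topology n).

(* Raw open-set families of T.T' and T(down)T'.  O(+n) is the image of O
   under rshift n : 'I_m -> 'I_(n+m) (k |-> n+k); O itself is embedded by
   lshift m : 'I_n -> 'I_(n+m). *)
Definition conc_raw n m (T : {set {set 'I_n}}) (T' : {set {set 'I_m}})
  : {set {set 'I_(n + m)}} :=
  [set (@lshift n m @: O) :|: (@rshift n m @: O') | O : {set 'I_n} in T, O' : {set 'I_m} in T'].

Definition down_raw n m (T : {set {set 'I_n}}) (T' : {set {set 'I_m}})
  : {set {set 'I_(n + m)}} :=
  [set (@lshift n m @: O) :|: (@rshift n m @: [set: 'I_m]) | O : {set 'I_n} in T]
  :|: [set (@rshift n m @: O') | O' : {set 'I_m} in T'].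

(* These raw families are always topologies, so [insubd] never uses its
   default; the default only avoids carrying the proof in the definition. *)
Definition tconc n m (T : topo n) (T' : topo m) : topo (n + m) :=
  insubd (indisc (n + m)) (conc_raw (val T) (val T')).
Definition tdown n m (T : topo n) (T' : topo m) : topo (n + m) :=
  insubd (indisc (n + m)) (down_raw (val T) (val T')).

Definition tot := {n : nat & topo n}.

Definition bconc (u v : tot) : tot := Tagged topo (tconc (tagged u) (tagged v)).
Definition bdown (u v : tot) : tot := Tagged topo (tdown (tagged u) (tagged v)).

Definition tunit : tot := Tagged topo (indisc 0).

Definition HT (K : fieldType) := {malg K[tot]}.

Definition hb (K : fieldType) (u : tot) : HT K := << u >>.
Definition hunit (K : fieldType) : HT K := hb K tunit.

Definition hconc (K : fieldType) (x y : HT K) : HT K :=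
  \sum_(u <- msupp x) \sum_(v <- msupp y) << (x@_u * y@_v) *g bconc u v >>.
Definition hdown (K : fieldType) (x y : HT K) : HT K :=
  \sum_(u <- msupp x) \sum_(v <- msupp y) << (x@_u * y@_v) *g bdown u v >>.

Definition indecomposable (u : tot) : Prop :=
  u <> tunit /\ ~ (exists v w, v <> tunit /\ w <> tunit /\ u = bconc v w).
Definition down_indecomposable (u : tot) : Prop :=
  u <> tunit /\ ~ (exists v w, v <> tunit /\ w <> tunit /\ u = bdown v w).
Definition bi_indecomposable (u : tot) : Prop :=
  indecomposable u /\ down_indecomposable u.

Definition two_assoc (K : fieldType) (A : lmodType K)
  (m1 m2 : A -> A -> A) (e : A) : Prop :=
  [/\ (forall x, linear (m1 x)) /\ (forall y, linear (m1^~ y)),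
      (forall x, linear (m2 x)) /\ (forall y, linear (m2^~ y)),
      associative m1 /\ associative m2,
      left_id e m1 /\ right_id e m1 &
      left_id e m2 /\ right_id e m2].

Definition unital_morph (K : fieldType) (A : lmodType K)
  (mH : HT K -> HT K -> HT K) (mA : A -> A -> A) (e : A) (phi : HT K -> A) : Prop :=
  [/\ linear phi, phi (hunit K) = e &
      forall x y, phi (mH x y) = mA (phi x) (phi y)].

Definition on_gens (K : fieldType) (A : Type) (P : tot -> Prop) (a : tot -> A)
  (phi : HT K -> A) : Prop :=
  forall u, P u -> phi (hb K u) = a u.

(* Main.v *)
Require Import Defs.
From HB Require Import structures.
From mathcomp Require Import all_boot all_order all_algebra.
From mathcomp Require Import finmap.
From mathcomp.multinomials Require Import monalg.
From mathcomp Require Import zify.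
From Stdlib Require Import ClassicalEpsilon Classical.
Set Implicit Arguments. Unset Strict Implicit. Unset Printing Implicit Defensive.

Section Raw.
Variables n m : nat.
Definition lpart (Y : {set 'I_(n+m)}) : {set 'I_n} := [set i | @lshift n m i \in Y].
Definition rpart (Y : {set 'I_(n+m)}) : {set 'I_m} := [set j | @rshift n m j \in Y].
Definition glue (O : {set 'I_n}) (O' : {set 'I_m}) : {set 'I_(n+m)} :=
  (@lshift n m @: O) :|: (@rshift n m @: O').

Lemma lr_false (i : 'I_n) (O' : {set 'I_m}) : (@lshift n m i \in @rshift n m @: O') = false.
Proof. by apply/imsetP=> -[j _ /eqP]; rewrite eq_lrshift. Qed.
Lemma rl_false (j : 'I_m) (O : {set 'I_n}) : (@rshift n m j \in @lshift n m @: O) = false.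
Proof. by apply/imsetP=> -[i _ /eqP]; rewrite eq_rlshift. Qed.

Lemma lpart_glue O O' : lpart (glue O O') = O.
Proof.
by apply/setP=> i; rewrite !inE lr_false orbF (mem_imset _ _ (@lshift_inj _ _)).
Qed.
Lemma rpart_glue O O' : rpart (glue O O') = O'.
Proof.
by apply/setP=> i; rewrite !inE rl_false (mem_imset _ _ (@rshift_inj _ _)).
Qed.
Lemma glue_part Y : glue (lpart Y) (rpart Y) = Y.
Proof.
apply/setP=> k; rewrite !inE; case: (split_ordP k) => j ->.
  by rewrite lr_false orbF (mem_imset _ _ (@lshift_inj _ _)) inE.
by rewrite rl_false (mem_imset _ _ (@rshift_inj _ _)) inE.
Qed.

Lemma mem_conc_raw T T' Y :
  (Y \in conc_raw T T') = (lpart Y \in T) && (rpart Y \in T').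
Proof.
apply/imset2P/andP => [[O O' hO hO' ->]|[h1 h2]].
  by rewrite -/(glue O O') lpart_glue rpart_glue.
by exists (lpart Y) (rpart Y) => //; rewrite -/(glue _ _) glue_part.
Qed.

Lemma mem_down_raw T T' Y : (Y \in down_raw T T') =
  ((lpart Y \in T) && (rpart Y == setT)) || ((lpart Y == set0) && (rpart Y \in T')).
Proof.
rewrite inE; congr orb.
  apply/imsetP/andP => [[O hO ->]|[h1 /eqP h2]].
    by rewrite -/(glue O setT) lpart_glue rpart_glue eqxx.
  by exists (lpart Y) => //; rewrite -h2 -/(glue _ _) glue_part.
apply/imsetP/andP => [[O hO ->]|[/eqP h1 h2]].
  have -> : @rshift n m @: O = glue set0 O by rewrite /glue imset0 set0U.
  by rewrite lpart_glue rpart_glue eqxx.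
exists (rpart Y) => //; rewrite -[LHS]glue_part h1 /glue imset0 set0U //.
Qed.

Lemma lpartU Y1 Y2 : lpart (Y1 :|: Y2) = lpart Y1 :|: lpart Y2.
Proof. by apply/setP=> i; rewrite !inE. Qed.
Lemma lpartI Y1 Y2 : lpart (Y1 :&: Y2) = lpart Y1 :&: lpart Y2.
Proof. by apply/setP=> i; rewrite !inE. Qed.
Lemma rpartU Y1 Y2 : rpart (Y1 :|: Y2) = rpart Y1 :|: rpart Y2.
Proof. by apply/setP=> i; rewrite !inE. Qed.
Lemma rpartI Y1 Y2 : rpart (Y1 :&: Y2) = rpart Y1 :&: rpart Y2.
Proof. by apply/setP=> i; rewrite !inE. Qed.
Lemma lpart0 : lpart set0 = set0. Proof. by apply/setP=> i; rewrite !inE. Qed.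
Lemma rpart0 : rpart set0 = set0. Proof. by apply/setP=> i; rewrite !inE. Qed.
Lemma lpartT : lpart setT = setT. Proof. by apply/setP=> i; rewrite !inE. Qed.
Lemma rpartT : rpart setT = setT. Proof. by apply/setP=> i; rewrite !inE. Qed.
End Raw.

Lemma topoP k (T : {set {set 'I_k}}) : is_topology T ->
  [/\ set0 \in T, setT \in T, forall O1 O2, O1 \in T -> O2 \in T -> O1 :|: O2 \in T
    & forall O1 O2, O1 \in T -> O2 \in T -> O1 :&: O2 \in T].
Proof.
case/and3P=> h0 h1 /forallP h; split=> // O1 O2 hO1 hO2;
by have /implyP /(_ hO1) /forallP /(_ O2) /implyP /(_ hO2) /andP[] := h O1.
Qed.

Lemma topoI k (T : {set {set 'I_k}}) : set0 \in T -> setT \in T ->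
  (forall O1 O2, O1 \in T -> O2 \in T -> O1 :|: O2 \in T) ->
  (forall O1 O2, O1 \in T -> O2 \in T -> O1 :&: O2 \in T) -> is_topology T.
Proof.
move=> h0 h1 hU hI; apply/and3P; split=> //.
apply/forallP=> O1; apply/implyP=> hO1; apply/forallP=> O2; apply/implyP=> hO2.
by rewrite hU ?hI.
Qed.

Lemma conc_topo n m (T : {set {set 'I_n}}) (T' : {set {set 'I_m}}) :
  is_topology T -> is_topology T' -> is_topology (conc_raw T T').
Proof.
move=> /topoP[a0 a1 aU aI] /topoP[b0 b1 bU bI].
apply: topoI; rewrite ?mem_conc_raw ?lpart0 ?rpart0 ?lpartT ?rpartT ?a0 ?b0 ?a1 ?b1 //;
move=> O1 O2; rewrite !mem_conc_raw ?lpartU ?rpartU ?lpartI ?rpartI;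
by case/andP=> h1 h2 /andP[h3 h4]; rewrite ?aU ?bU ?aI ?bI.
Qed.

Lemma down_topo n m (T : {set {set 'I_n}}) (T' : {set {set 'I_m}}) :
  is_topology T -> is_topology T' -> is_topology (down_raw T T').
Proof.
move=> /topoP[a0 a1 aU aI] /topoP[b0 b1 bU bI].
apply: topoI; rewrite ?mem_down_raw ?lpart0 ?rpart0 ?lpartT ?rpartT ?a0 ?b0 ?a1 ?b1 ?eqxx ?orbT //;
move=> O1 O2; rewrite !mem_down_raw ?lpartU ?rpartU ?lpartI ?rpartI.
  case/orP=> /andP[h1 h2] /orP[]/andP[h3 h4].
  - by rewrite (eqP h2) (eqP h4) setUT aU // eqxx.
  - by rewrite (eqP h2) (eqP h3) setU0 setTU h1 eqxx.
  - by rewrite (eqP h1) (eqP h4) set0U setUT h3 eqxx.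
  - by rewrite (eqP h1) (eqP h3) setU0 eqxx bU ?orbT.
case/orP=> /andP[h1 h2] /orP[]/andP[h3 h4].
- by rewrite (eqP h2) (eqP h4) setIT aI // eqxx.
- by rewrite (eqP h2) (eqP h3) setI0 setTI h4 eqxx orbT.
- by rewrite (eqP h1) (eqP h4) set0I setIT h2 eqxx orbT.
- by rewrite (eqP h1) (eqP h3) setI0 eqxx bI ?orbT.
Qed.

Lemma val_tconc n m (u : topo n) (v : topo m) : val (tconc u v) = conc_raw (val u) (val v).
Proof. by rewrite /tconc insubdK //; apply: conc_topo; [exact: valP|exact: valP]. Qed.
Lemma val_tdown n m (u : topo n) (v : topo m) : val (tdown u v) = down_raw (val u) (val v).
Proof. by rewrite /tdown insubdK //; apply: down_topo; [exact: valP|exact: valP]. Qed.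

Definition opn (u : tot) (X : pred nat) : bool :=
  [set i : 'I_(tag u) | X i] \in val (tagged u).

Lemma opn_ext u X Y : (forall i, i < tag u -> X i = Y i) -> opn u X = opn u Y.
Proof.
move=> h; rewrite /opn (_ : [set i : 'I_(tag u) | X i] = [set i : 'I_(tag u) | Y i]) //.
by apply/setP=> i; rewrite !inE h.
Qed.

Lemma opn_conc u v X : opn (bconc u v) X = opn u X && opn v (fun i => X (tag u + i)).
Proof.
case: u => n t; case: v => m t'; rewrite /opn /bconc /= val_tconc mem_conc_raw /=.
have -> : lpart [set i : 'I_(n + m) | X i] = [set i : 'I_n | X i].
  by apply/setP=> i; rewrite !inE.
have -> : rpart [set i : 'I_(n + m) | X i] = [set i : 'I_m | X (n + i)].
  by apply/setP=> i; rewrite !inE.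
by [].
Qed.

Lemma setT_all k (P : pred nat) : ([set j : 'I_k | P j] == setT) = all P (iota 0 k).
Proof.
apply/eqP/allP => [h i | h].
  rewrite mem_iota add0n => /andP[_ ik]; move: (congr1 (fun S : {set 'I_k} => Ordinal ik \in S) h).
  by rewrite !inE.
by apply/setP=> j; rewrite !inE h // mem_iota add0n ltn_ord.
Qed.

Lemma set0_all k (P : pred nat) : ([set j : 'I_k | P j] == set0) = all (predC P) (iota 0 k).
Proof.
apply/eqP/allP => [h i | h].
  rewrite mem_iota add0n => /andP[_ ik]; move: (congr1 (fun S : {set 'I_k} => Ordinal ik \in S) h).
  by rewrite !inE => ->.
by apply/setP=> j; rewrite !inE; apply/negbTE; apply: h; rewrite mem_iota add0n ltn_ord.
Qed.

Lemma all_shift (X : pred nat) a b : all (fun j => X (a + j)) (iota 0 b) = all X (iota a b).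
Proof. by rewrite -[in RHS](addn0 a) iotaDl all_map. Qed.

Lemma opn_down u v X : opn (bdown u v) X =
  (opn u X && all X (iota (tag u) (tag v))) ||
  (all (predC X) (iota 0 (tag u)) && opn v (fun i => X (tag u + i))).
Proof.
case: u => n t; case: v => m t'; rewrite /opn /bdown /= val_tdown mem_down_raw /=.
have -> : lpart [set i : 'I_(n + m) | X i] = [set i : 'I_n | X i].
  by apply/setP=> i; rewrite !inE.
have -> : rpart [set i : 'I_(n + m) | X i] = [set i : 'I_m | X (n + i)].
  by apply/setP=> i; rewrite !inE.
by rewrite (setT_all m (fun j => X (n + j))) (set0_all n X) all_shift.
Qed.

Section OpnTop.
Variable u : tot.
Let hT := topoP (valP (tagged u)).
Lemma opn0 : opn u pred0.
Proof.
rewrite /opn; have -> : [set i : 'I_(tag u) | pred0 i] = set0 by apply/setP=> i; rewrite !inE.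
by case: hT.
Qed.
Lemma opnT : opn u predT.
Proof.
rewrite /opn; have -> : [set i : 'I_(tag u) | predT i] = setT by apply/setP=> i; rewrite !inE.
by case: hT.
Qed.
Lemma opnU X Y : opn u X -> opn u Y -> opn u (fun i => X i || Y i).
Proof.
rewrite /opn; have -> : [set i : 'I_(tag u) | X i || Y i] =
  [set i : 'I_(tag u) | X i] :|: [set i : 'I_(tag u) | Y i] by apply/setP=> i; rewrite !inE.
by case: hT => _ _ h _; apply: h.
Qed.
Lemma opnI X Y : opn u X -> opn u Y -> opn u (fun i => X i && Y i).
Proof.
rewrite /opn; have -> : [set i : 'I_(tag u) | X i && Y i] =
  [set i : 'I_(tag u) | X i] :&: [set i : 'I_(tag u) | Y i] by apply/setP=> i; rewrite !inE.
by case: hT => _ _ _ h; apply: h.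
Qed.
Lemma opn_all X : all X (iota 0 (tag u)) -> opn u X.
Proof.
move/allP=> h; rewrite (@opn_ext _ _ predT) ?opnT // => i hi.
by rewrite h // mem_iota add0n.
Qed.
Lemma opn_none X : all (predC X) (iota 0 (tag u)) -> opn u X.
Proof.
move/allP=> h; rewrite (@opn_ext _ _ pred0) ?opn0 // => i hi.
by apply/negbTE; apply: (h i); rewrite mem_iota add0n.
Qed.
End OpnTop.

Lemma tot_eq u v : tag u = tag v -> (forall X, opn u X = opn v X) -> u = v.
Proof.
case: u v => [n t] [m t'] /= e; subst m => h; congr (Tagged _ _).
apply/val_inj/setP => O; move: (h (fun i => [exists j in O, val j == i])).
rewrite /opn /=.
have -> : [set i : 'I_n | [exists j in O, val j == i]] = O.
  apply/setP=> i; rewrite inE; apply/existsP/idP => [[j /andP[jO /eqP ji]]|iO].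
    by have -> : i = j by apply: val_inj.
  by exists i; rewrite iO eqxx.
by [].
Qed.

Lemma opn_tag0 u X : tag u = 0 -> opn u X.
Proof.
move=> h; apply: opn_all; by rewrite h.
Qed.

Lemma tag0 u : tag u = 0 -> u = tunit.
Proof. by move=> h; apply: tot_eq => // X; rewrite !opn_tag0. Qed.

Lemma tag_gt0 u : u <> tunit -> 0 < tag u.
Proof. by move=> h; case: (posnP (tag u)) => // /tag0. Qed.

Lemma tag_tunit : tag tunit = 0. Proof. by []. Qed.
Lemma tag_conc u v : tag (bconc u v) = tag u + tag v. Proof. by []. Qed.
Lemma tag_down u v : tag (bdown u v) = tag u + tag v. Proof. by []. Qed.

Lemma conc1u u : bconc tunit u = u.
Proof.
apply: tot_eq => [|X]; first by rewrite tag_conc add0n.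
by rewrite opn_conc opn_tag0.
Qed.
Lemma concu1 u : bconc u tunit = u.
Proof.
apply: tot_eq => [|X]; first by rewrite tag_conc addn0.
by rewrite opn_conc (@opn_tag0 tunit) ?andbT.
Qed.
Lemma concA u v w : bconc (bconc u v) w = bconc u (bconc v w).
Proof.
apply: tot_eq => [|X]; first by rewrite !tag_conc addnA.
rewrite !opn_conc andbA; congr andb; apply: opn_ext => i _; by rewrite addnA.
Qed.

Lemma down1u u : bdown tunit u = u.
Proof.
apply: tot_eq => [|X]; first by rewrite tag_down add0n.
rewrite opn_down.
have h1 : opn tunit X by apply: opn_tag0.
rewrite h1 andTb !tag_tunit.

rewrite (@opn_ext u (fun i => X (0 + i)) X) // andTb.

by case h: (all X _) => //; rewrite (opn_all h).
Qed.
Lemma downu1 u : bdown u tunit = u.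
Proof.
apply: tot_eq => [|X]; first by rewrite tag_down addn0.
rewrite opn_down.
have h1 : opn tunit (fun i => X (tag u + i)) by apply: opn_tag0.
rewrite h1 andbT !tag_tunit.
have -> : all X (iota (tag u) 0) = true by [].
rewrite andbT.
by case h: (all _ _); rewrite ?orbF // (opn_none h) orbT.
Qed.
Lemma all_sh X a b c : all (fun i => X (a + i)) (iota b c) = all X (iota (a + b) c).
Proof. by rewrite iotaDl all_map. Qed.
Lemma allC_sh X a b c : all (predC (fun i => X (a + i))) (iota b c) = all (predC X) (iota (a + b) c).
Proof. by rewrite iotaDl all_map; apply: eq_all. Qed.
Lemma downA u v w : bdown (bdown u v) w = bdown u (bdown v w).
Proof.
apply: tot_eq => [|X]; first by rewrite !tag_down addnA.
rewrite !opn_down !tag_down all_sh allC_sh addn0 iotaD all_cat.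
rewrite add0n [iota (tag u) (_ + _)]iotaD all_cat.
have -> : opn w (fun i => X (tag u + tag v + i)) = opn w (fun i => X (tag u + (tag v + i))).
  by apply: opn_ext => i _; rewrite addnA.
by case: (opn u X); case: (all X (iota (tag u) (tag v))); case: (all X (iota (tag u + tag v) (tag w)));
  case: (all (predC X) (iota 0 (tag u))); case: (all (predC X) (iota (tag u) (tag v)));
  case: (opn v _); case: (opn w _).
Qed.

Definition natp k (O : {set 'I_k}) : pred nat := fun i => [exists j in O, val j == i].

Lemma natp_lt k (O : {set 'I_k}) i (h : i < k) : natp O i = (Ordinal h \in O).
Proof.
apply/existsP/idP => [[j /andP[jO /eqP e]]|hO].
  by have -> : Ordinal h = j by apply: val_inj.
by exists (Ordinal h); rewrite hO eqxx.
Qed.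
Lemma natp_out k (O : {set 'I_k}) i : k <= i -> natp O i = false.
Proof.
move=> h; apply/existsP=> -[j /andP[_ /eqP e]]; have := ltn_ord j; rewrite e.
by rewrite ltnNge h.
Qed.
Lemma natp_set k (P : pred nat) i : natp [set j : 'I_k | P j] i = (i < k) && P i.
Proof. by case: (ltnP i k) => h; [rewrite (natp_lt _ h) inE | rewrite natp_out]. Qed.
Lemma natpU k (O1 O2 : {set 'I_k}) i : natp (O1 :|: O2) i = natp O1 i || natp O2 i.
Proof. by case: (ltnP i k) => h; [rewrite !(natp_lt _ h) inE | rewrite !natp_out]. Qed.
Lemma natpI k (O1 O2 : {set 'I_k}) i : natp (O1 :&: O2) i = natp O1 i && natp O2 i.
Proof. by case: (ltnP i k) => h; [rewrite !(natp_lt _ h) inE | rewrite !natp_out]. Qed.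
Lemma natp0 k i : natp (set0 : {set 'I_k}) i = false.
Proof. by case: (ltnP i k) => h; [rewrite !(natp_lt _ h) inE | rewrite !natp_out]. Qed.
Lemma natpT k i : natp (setT : {set 'I_k}) i = (i < k).
Proof. by case: (ltnP i k) => h; [rewrite !(natp_lt _ h) inE | rewrite !natp_out]. Qed.
Lemma natpK k (O : {set 'I_k}) : [set i : 'I_k | natp O i] = O.
Proof.
by apply/setP=> i; rewrite inE (natp_lt _ (ltn_ord i)); have -> : Ordinal (ltn_ord i) = i by apply: val_inj.
Qed.

Definition ccut u k := forall X, opn u X ->
  opn u (fun i => X i && (i < k)) && opn u (fun i => X i && (k <= i)).

Lemma conc_cut v w : ccut (bconc v w) (tag v).
Proof.
move=> X; rewrite !opn_conc => /andP[h1 h2]; apply/andP; split; apply/andP; split.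
- by rewrite (@opn_ext v _ X) // => i hi; rewrite hi andbT.
- by rewrite (@opn_ext w _ pred0) ?opn0 // => i _; rewrite ltnNge leq_addr andbF.
- by rewrite (@opn_ext v _ pred0) ?opn0 // => i hi; rewrite leqNgt hi andbF.
- by rewrite (@opn_ext w _ (fun i => X (tag v + i))) // => i _; rewrite leq_addr andbT.
Qed.

Section Cut.
Variables (u : tot) (k : nat).
Hypothesis hk : k <= tag u.

Definition Rset := [set O : {set 'I_(tag u - k)} | opn u (fun i => (k <= i) && natp O (i - k))].

Lemma Rtopo : opn u (fun i => k <= i) -> is_topology Rset.
Proof.
move=> hR; apply: topoI; rewrite ?inE.
- by rewrite (@opn_ext u _ pred0) ?opn0 // => i _; rewrite natp0 andbF.
- by rewrite (@opn_ext u _ (fun i => k <= i)) // => i hi; rewrite natpT; case: leqP => //= ki; lia.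
- move=> O1 O2; rewrite !inE => h1 h2.
  rewrite (@opn_ext u _ (fun i => ((k <= i) && natp O1 (i - k)) || ((k <= i) && natp O2 (i - k)))).
    exact: opnU.
  by move=> i _; rewrite natpU andb_orr.
- move=> O1 O2; rewrite !inE => h1 h2.
  rewrite (@opn_ext u _ (fun i => ((k <= i) && natp O1 (i - k)) && ((k <= i) && natp O2 (i - k)))).
    exact: opnI.
  by move=> i _; rewrite natpI; case: (k <= i).
Qed.

Definition Lset := [set O : {set 'I_k} | opn u (natp O)].

Lemma Ltopo : opn u (fun i => i < k) -> is_topology Lset.
Proof.
move=> hL; apply: topoI; rewrite ?inE.
- by rewrite (@opn_ext u _ pred0) ?opn0 // => i _; rewrite natp0.
- by rewrite (@opn_ext u _ (fun i => i < k)) // => i hi; rewrite natpT.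
- move=> O1 O2; rewrite !inE => h1 h2.
  by rewrite (@opn_ext u _ (fun i => natp O1 i || natp O2 i)) ?opnU // => i _; rewrite natpU.
- move=> O1 O2; rewrite !inE => h1 h2.
  by rewrite (@opn_ext u _ (fun i => natp O1 i && natp O2 i)) ?opnI // => i _; rewrite natpI.
Qed.

Lemma cut_conc : ccut u k -> exists v w, tag v = k /\ u = bconc v w.
Proof.
move=> hc.
have /andP[hL hR] := hc _ (opnT u).
have hLt := Ltopo hL; have hRt := Rtopo hR.
exists (Tagged topo (exist _ Lset hLt)), (Tagged topo (exist _ Rset hRt)); split => //.
apply: esym; apply: tot_eq => [|X]; first by rewrite tag_conc /= subnKC.
rewrite opn_conc /opn /= !inE -/(opn u _) -/(opn u _).
rewrite (@opn_ext u _ (fun i => X i && (i < k))); last first.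
  by move=> i _; rewrite (natp_set k X) andbC.
rewrite (@opn_ext u (fun i => (k <= i) && _) (fun i => X i && (k <= i))); last first.
  move=> i hi; have E := natp_set (tag u - k) (fun j => X (k + j)) (i - k); simpl in E; rewrite E; case: (leqP k i) => ki //=; last by rewrite andbF.
  rewrite subnKC // andbT; have -> : i - k < tag u - k by lia.
  by [].
apply/idP/idP => [/andP[h1 h2]|h]; last exact: hc.
rewrite (@opn_ext u _ (fun i => (X i && (i < k)) || (X i && (k <= i)))) ?opnU //.
by move=> i _; case: (X i); case: ltnP.
Qed.

Definition dcut := opn u (fun i => k <= i) /\ forall X, opn u X ->
  all X (iota k (tag u - k)) || all (predC X) (iota 0 k).

Definition Dset := [set O : {set 'I_k} | opn u (fun i => natp O i || (k <= i))].

Lemma Dtopo : opn u (fun i => k <= i) -> is_topology Dset.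
Proof.
move=> hR; apply: topoI; rewrite ?inE.
- by rewrite (@opn_ext u _ (fun i => k <= i)) // => i _; rewrite natp0.
- by rewrite (@opn_ext u _ predT) ?opnT // => i _; rewrite natpT; case: ltnP.
- move=> O1 O2; rewrite !inE => h1 h2.
  rewrite (@opn_ext u _ (fun i => (natp O1 i || (k <= i)) || (natp O2 i || (k <= i)))); first exact: (opnU h1 h2).
  by move=> i _; rewrite natpU; case: (natp O1 i); case: (natp O2 i); case: (k <= i).
- move=> O1 O2; rewrite !inE => h1 h2.
  rewrite (@opn_ext u _ (fun i => (natp O1 i || (k <= i)) && (natp O2 i || (k <= i)))); first exact: (opnI h1 h2).
  by move=> i _; rewrite natpI; case: (natp O1 i); case: (natp O2 i); case: (k <= i).
Qed.

Lemma dcut_down : dcut -> exists v w, tag v = k /\ u = bdown v w.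
Proof.
move=> [hR hc].
have hLt := Dtopo hR; have hRt := Rtopo hR.
exists (Tagged topo (exist _ Dset hLt)), (Tagged topo (exist _ Rset hRt)); split => //.
apply: esym; apply: tot_eq => [|X]; first by rewrite tag_down /= subnKC.
rewrite opn_down /opn /= !inE -/(opn u _) -/(opn u _).
rewrite (@opn_ext u (fun i => _ && _) (fun i => (k <= i) && X i)); last first.
  move=> i hi; have E := natp_set (tag u - k) (fun j => X (k + j)) (i - k); simpl in E; rewrite E; case: (leqP k i) => ki //=.
  rewrite subnKC //; have -> : i - k < tag u - k by lia.
  by [].
have E1 : all X (iota k (tag u - k)) ->
    opn u (fun i => natp [set j : 'I_k | X j] i || (k <= i)) = opn u X.
  move=> hA; apply: opn_ext => i hi; rewrite (natp_set k X); case: (ltnP i k) => ki //=.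
    by rewrite orbF.
  rewrite ?orbT; apply/esym; move/allP: hA; apply; rewrite mem_iota subnKC //; lia.
have E2 : all (predC X) (iota 0 k) -> opn u (fun i => (k <= i) && X i) = opn u X.
  move=> hB; apply: opn_ext => i hi; case: (leqP k i) => ki //=; apply/esym/negbTE.
  by move/allP: hB; apply; rewrite mem_iota add0n.
case hA: (all X _); case hB: (all (predC X) _).
- by rewrite (E1 hA) (E2 hB) andbT andTb orbb.
- by rewrite (E1 hA) andbT andFb orbF.
- by rewrite (E2 hB) andbF andTb.
rewrite andbF andFb /=.
by apply/esym/negP=> /hc; rewrite hA hB.
Qed.
End Cut.

Lemma down_dcut v w : dcut (bdown v w) (tag v).
Proof.
split.
  rewrite opn_down; apply/orP; left; apply/andP; split.
    rewrite (@opn_ext v _ pred0); first exact: opn0.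
    by move=> i hi; rewrite leqNgt hi.
  by apply/allP => i; rewrite mem_iota => /andP[].
move=> X; rewrite opn_down tag_down addKn.
by case/orP=> /andP[h1 h2]; [rewrite h2 | rewrite h1 orbT].
Qed.

Lemma opn_conc_left v w X : opn (bconc v w) (fun i => X i && (i < tag v)) = opn v X.
Proof.
rewrite opn_conc (@opn_ext w _ pred0); last by move=> i _; rewrite ltnNge leq_addr andbF.
rewrite opn0 andbT; apply: opn_ext => i hi; by rewrite hi andbT.
Qed.

Lemma opn_conc_right v w Y : opn (bconc v w) (fun i => (tag v <= i) && Y (i - tag v)) = opn w Y.
Proof.
rewrite opn_conc (@opn_ext v _ pred0); last by move=> i hi; rewrite leqNgt hi.
rewrite opn0; apply: opn_ext => i _; by rewrite leq_addr addKn.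
Qed.

Lemma opn_down_left v w X :
  opn (bdown v w) (fun i => ((i < tag v) && X i) || (tag v <= i)) = opn v X.
Proof.
rewrite opn_down (@opn_ext v _ X); last by move=> i hi; rewrite hi leqNgt hi orbF.
have -> : all (fun i => ((i < tag v) && X i) || (tag v <= i)) (iota (tag v) (tag w)).
  by apply/allP=> i; rewrite mem_iota => /andP[h _] /=; rewrite h orbT.
rewrite andbT; case h: (all _ _); last by rewrite andFb orbF.
have hv : opn v X.
  apply: opn_none; apply/allP=> i hi; have := allP h i hi.
  by move: hi; rewrite mem_iota add0n => /andP[_ hi] /=; rewrite hi /= leqNgt hi orbF.
by rewrite hv.
Qed.

Lemma opn_down_right v w Y :
  opn (bdown v w) (fun i => (tag v <= i) && Y (i - tag v)) = opn w Y.
Proof.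
rewrite opn_down (@opn_ext v _ pred0); last by move=> i hi; rewrite leqNgt hi.
rewrite opn0 /= (@opn_ext w _ Y); last by move=> i _; rewrite leq_addr addKn.
have -> : all (predC (fun i => (tag v <= i) && Y (i - tag v))) (iota 0 (tag v)).
  by apply/allP=> i; rewrite mem_iota add0n => /andP[_ hi] /=; rewrite leqNgt hi.
rewrite andTb; case h: (all _ _) => //; rewrite orTb; symmetry; apply: opn_all.
apply/allP => i; rewrite mem_iota add0n => /andP[_ hi]; have := allP h (tag v + i).
by rewrite mem_iota leq_addr ltn_add2l hi addKn => /(_ isT) /andP[].
Qed.

Lemma nonunit_tag u : 0 < tag u -> u <> tunit.
Proof. by move=> h e; rewrite e in h. Qed.

Lemma conc_lt v w v' w' : bconc v w = bconc v' w' -> 0 < tag v -> tag v < tag v' ->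
  ~ indecomposable v'.
Proof.
move=> e hv hlt [_ hnd]; apply: hnd.
have hc : ccut v' (tag v).
  move=> X hX.
  have hZ : opn (bconc v' w') (fun i => X i && (i < tag v')) by rewrite opn_conc_left.
  rewrite -e in hZ; have /andP[h1 h2] := conc_cut hZ.
  rewrite e opn_conc in h1; rewrite e opn_conc in h2.
  move/andP: h1 => [h1 _]; move/andP: h2 => [h2 _].
  apply/andP; split.
    by rewrite -(@opn_ext v' (fun i => (X i && (i < tag v')) && (i < tag v))) // => i hi; rewrite hi andbT.
  by rewrite -(@opn_ext v' (fun i => (X i && (i < tag v')) && (tag v <= i))) // => i hi; rewrite hi andbT.
have [a [b [ha e']]] := cut_conc (ltnW hlt) hc.
have tb : tag v' = tag a + tag b by rewrite e'.
exists a, b; split; [|split] => //; apply: nonunit_tag; lia.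
Qed.

Lemma conc_first v w v' w' : bconc v w = bconc v' w' ->
  indecomposable v -> indecomposable v' -> v = v' /\ w = w'.
Proof.
move=> e hv hv'; have p := tag_gt0 hv.1; have p' := tag_gt0 hv'.1.
have ht : tag v = tag v'.
  case: (ltngtP (tag v) (tag v')) => // h.
    by case: (conc_lt e p h hv').
  by case: (conc_lt (esym e) p' h hv).
have ht2 : tag w = tag w'.
  have := congr1 tag e; rewrite !tag_conc ht; exact: addnI.
split; apply: tot_eq => // X.
  by rewrite -(opn_conc_left v w) e ht opn_conc_left.
by rewrite -(opn_conc_right v w) e ht opn_conc_right.
Qed.

Lemma down_lt v w v' w' : bdown v w = bdown v' w' -> 0 < tag v -> tag v < tag v' ->
  ~ down_indecomposable v'.
Proof.
move=> e hv hlt [_ hnd]; apply: hnd.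
have [d1 d2] := down_dcut v w; rewrite e in d1 d2.
have hN : tag (bdown v' w') = tag v' + tag w' by [].
have hd : dcut v' (tag v).
  split.
    move: d1; rewrite opn_down; case/orP=> /andP[// h1 h2].
    move/allP: h1 => /(_ (tag v)); rewrite mem_iota add0n hlt /= leqnn => /(_ isT).
    by [].
  move=> X hX.
  have hZ : opn (bdown v' w') (fun i => ((i < tag v') && X i) || (tag v' <= i)) by rewrite opn_down_left.
  have := d2 _ hZ; rewrite hN.
  case/orP=> /allP h; apply/orP; [left|right]; apply/allP => i; rewrite mem_iota => /andP[h1 h2].
    have := h i; rewrite mem_iota h1 /=; have -> : i < tag v + (tag v' + tag w' - tag v) by lia.
    have -> : i < tag v' by lia.
    by move=> /(_ isT); rewrite leqNgt (_ : i < tag v' = true) ?orbF //; lia.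
  have := h i; rewrite mem_iota h1 h2 /= => /(_ isT).
  by rewrite (_ : i < tag v' = true) ?orbF //; [rewrite leqNgt (_ : i < tag v' = true) // ?orbF; lia|lia].
have [a [b [ha e']]] := dcut_down (ltnW hlt) hd.
have tb : tag v' = tag a + tag b by rewrite e'.
exists a, b; split; [|split] => //; apply: nonunit_tag; lia.
Qed.

Lemma down_first v w v' w' : bdown v w = bdown v' w' ->
  down_indecomposable v -> down_indecomposable v' -> v = v' /\ w = w'.
Proof.
move=> e hv hv'; have p := tag_gt0 hv.1; have p' := tag_gt0 hv'.1.
have ht : tag v = tag v'.
  case: (ltngtP (tag v) (tag v')) => // h.
    by case: (down_lt e p h hv').
  by case: (down_lt (esym e) p' h hv).
have ht2 : tag w = tag w'.
  have := congr1 tag e; rewrite !tag_down ht; exact: addnI.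
split; apply: tot_eq => // X.
  by rewrite -(opn_down_left v w) e ht opn_down_left.
by rewrite -(opn_down_right v w) e ht opn_down_right.
Qed.

Lemma conc_down_excl v w v' w' : bconc v w = bdown v' w' ->
  v <> tunit -> w <> tunit -> v' <> tunit -> w' <> tunit -> False.
Proof.
move=> e hv hw hv' hw'.
move: (tag_gt0 hv) (tag_gt0 hw) (tag_gt0 hv') (tag_gt0 hw') => p1 p2 p3 p4.
have hN : tag v + tag w = tag v' + tag w' by rewrite -tag_conc e.
have hZ : opn (bconc v w) (fun i => predT i && (i < tag v)) by rewrite opn_conc_left opnT.
rewrite e in hZ; have := (down_dcut v' w').2 _ hZ; rewrite tag_down addKn.
case/orP=> /allP h.
  have := h (tag v' + tag w').-1; rewrite mem_iota /=.
  have -> : tag v' <= (tag v' + tag w').-1 < tag v' + tag w' by apply/andP; split; lia.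
  by move=> /(_ isT); have -> : (tag v' + tag w').-1 < tag v = false by lia.
have := h 0; rewrite mem_iota /= p3 => /(_ isT) /=; by rewrite p1.
Qed.


Section Gen.
Variables (A : Type) (e : A) (m1 m2 : A -> A -> A) (a : tot -> A).
Variables (D1 D2 : tot -> tot -> tot -> Prop).
Hypothesis dec1 : forall u v w, D1 u v w -> tag v < tag u /\ tag w < tag u.
Hypothesis dec2 : forall u v w, D2 u v w -> tag v < tag u /\ tag w < tag u.
Hypothesis uniq1 : forall u v w v' w', D1 u v w -> D1 u v' w' -> v = v' /\ w = w'.
Hypothesis uniq2 : forall u v w v' w', D2 u v w -> D2 u v' w' -> v = v' /\ w = w'.
Hypothesis excl : forall u v w v' w', D1 u v w -> D2 u v' w' -> False.

Definition step (F : tot -> A) (u : tot) : A :=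
  match excluded_middle_informative (exists p : tot * tot, D1 u p.1 p.2) with
  | left H => let p := proj1_sig (constructive_indefinite_description _ H) in m1 (F p.1) (F p.2)
  | right _ =>
    match excluded_middle_informative (exists p : tot * tot, D2 u p.1 p.2) with
    | left H => let p := proj1_sig (constructive_indefinite_description _ H) in m2 (F p.1) (F p.2)
    | right _ => match excluded_middle_informative (u = tunit) with
                 | left _ => e | right _ => a u end
    end
  end.

Fixpoint Ff (k : nat) (u : tot) : A := if k is k'.+1 then step (Ff k') u else e.
Definition gf u := Ff (tag u).+1 u.

Lemma Ff_stable k k' u : tag u < k -> tag u < k' -> Ff k u = Ff k' u.
Proof.
elim: k k' u => [|k IH] [|k'] u //= h h'.
rewrite /step.
case: excluded_middle_informative => H.
  case: (constructive_indefinite_description _ H) => -[v w] /= hp.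
  have [d1 d2] := dec1 hp.
  by rewrite (IH k' v) ?(IH k' w) //; lia.
case: excluded_middle_informative => H2 //.
case: (constructive_indefinite_description _ H2) => -[v w] /= hp.
have [d1 d2] := dec2 hp.
by rewrite (IH k' v) ?(IH k' w) //; lia.
Qed.

Lemma gf_step u : gf u = step gf u.
Proof.
rewrite /gf /= /step.
case: excluded_middle_informative => H.
  case: (constructive_indefinite_description _ H) => -[v w] /= hp.
  have [d1 d2] := dec1 hp.
  by rewrite /gf (@Ff_stable (tag u) (tag v).+1 v) ?(@Ff_stable (tag u) (tag w).+1 w).
case: excluded_middle_informative => H2 //.
case: (constructive_indefinite_description _ H2) => -[v w] /= hp.
have [d1 d2] := dec2 hp.
by rewrite /gf (@Ff_stable (tag u) (tag v).+1 v) ?(@Ff_stable (tag u) (tag w).+1 w).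
Qed.

Lemma gf_D1 u v w : D1 u v w -> gf u = m1 (gf v) (gf w).
Proof.
move=> hD; rewrite gf_step /step.
case: excluded_middle_informative => H; last by exfalso; apply: H; exists (v, w).
case: (constructive_indefinite_description _ H) => -[v' w'] /= hp.
by have [-> ->] := uniq1 hp hD.
Qed.

Lemma gf_D2 u v w : D2 u v w -> gf u = m2 (gf v) (gf w).
Proof.
move=> hD; rewrite gf_step /step.
case: excluded_middle_informative => H.
  by exfalso; case: H => -[v' w'] /= /excl; apply; exact: hD.
case: excluded_middle_informative => H2; last by exfalso; apply: H2; exists (v, w).
case: (constructive_indefinite_description _ H2) => -[v' w'] /= hp.
by have [-> ->] := uniq2 hp hD.
Qed.

Lemma gf_unit : gf tunit = e.
Proof.
rewrite gf_step /step.
case: excluded_middle_informative => H.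
  by exfalso; case: H => -[v w] /= /dec1 [].
case: excluded_middle_informative => H2.
  by exfalso; case: H2 => -[v w] /= /dec2 [].
by case: excluded_middle_informative.
Qed.

Lemma gf_spec : [/\ gf tunit = e,
  (forall u v w, D1 u v w -> gf u = m1 (gf v) (gf w)),
  (forall u v w, D2 u v w -> gf u = m2 (gf v) (gf w)) &
  (forall u, u <> tunit -> (forall v w, ~ D1 u v w) -> (forall v w, ~ D2 u v w) -> gf u = a u)].
Proof.
split; [exact: gf_unit|exact: gf_D1|exact: gf_D2|].
move=> u hu h1 h2; rewrite gf_step /step.
case: excluded_middle_informative => H; first by exfalso; case: H => -[v w] /h1.
case: excluded_middle_informative => H2; first by exfalso; case: H2 => -[v w] /h2.
by case: excluded_middle_informative.
Qed.

Lemma gf_gen u : u <> tunit -> (forall v w, ~ D1 u v w) -> (forall v w, ~ D2 u v w) ->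
  gf u = a u.
Proof.
move=> hu h1 h2; rewrite gf_step /step.
case: excluded_middle_informative => H; first by exfalso; case: H => -[v w] /h1.
case: excluded_middle_informative => H2; first by exfalso; case: H2 => -[v w] /h2.
by case: excluded_middle_informative.
Qed.
End Gen.

Lemma strong_tag (P : tot -> Prop) :
  (forall u, (forall v, tag v < tag u -> P v) -> P u) -> forall u, P u.
Proof.
move=> h; suff H : forall n u, tag u < n -> P u by move=> u; apply: (H (tag u).+1).
elim=> [|n IH] u hu //; apply: h => v hv; apply: IH; lia.
Qed.

Section Mult.
Variables (A : Type) (e : A) (mA : A -> A -> A) (f : tot -> A) (bm : tot -> tot -> tot).
Hypothesis bm1u : forall u, bm tunit u = u.
Hypothesis bmu1 : forall u, bm u tunit = u.
Hypothesis bmA : forall u v w, bm (bm u v) w = bm u (bm v w).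
Hypothesis tag_bm : forall u v, tag (bm u v) = tag u + tag v.
Hypothesis mA1x : forall x, mA e x = x.
Hypothesis mAx1 : forall x, mA x e = x.
Hypothesis mAA : forall x y z, mA (mA x y) z = mA x (mA y z).

Definition Ind u := u <> tunit /\ ~ (exists v w, v <> tunit /\ w <> tunit /\ u = bm v w).

Lemma first_factor u : u <> tunit -> ~ Ind u -> exists v w, Ind v /\ w <> tunit /\ u = bm v w.
Proof.
move: u; apply: strong_tag => u IH hu hI.
have [v [w [hv [hw e1]]]] : exists v w, v <> tunit /\ w <> tunit /\ u = bm v w.
  by apply: NNPP => hn; apply: hI; split.
have [hIv|hIv] := classic (Ind v); first by exists v, w.
have tv : tag v < tag u by rewrite e1 tag_bm; have := tag_gt0 hw; lia.
have [v1 [v2 [h1 [h2 e2]]]] := IH v tv hv hIv.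
exists v1, (bm v2 w); split => //; split; last by rewrite e1 e2 bmA.
by apply: nonunit_tag; rewrite tag_bm; have := tag_gt0 hw; lia.
Qed.

Hypothesis feq : forall v w, Ind v -> w <> tunit -> f (bm v w) = mA (f v) (f w).
Hypothesis f1 : f tunit = e.

Lemma f_mult x y : f (bm x y) = mA (f x) (f y).
Proof.
move: x y; apply: (@strong_tag (fun x => forall y, f (bm x y) = mA (f x) (f y))) => x IH y.
have [->|hx] := classic (x = tunit); first by rewrite bm1u f1 mA1x.
have [->|hy] := classic (y = tunit); first by rewrite bmu1 f1 mAx1.
have [hI|hI] := classic (Ind x); first exact: feq.
have [v [w [hv [hw ex]]]] := first_factor hx hI.
have tw : tag w < tag x by rewrite ex tag_bm; have := tag_gt0 hv.1; lia.
rewrite ex.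
rewrite bmA feq //; last by apply: nonunit_tag; rewrite tag_bm; have := tag_gt0 hw; lia.
by rewrite (IH w tw y) (@feq v w) // mAA.
Qed.
End Mult.


Local Open Scope ring_scope.
Import GRing.Theory.

Section Lin.
Variable K : fieldType.

Lemma lin_props (U V : lmodType K) (g : U -> V) : linear g ->
  [/\ g 0 = 0, forall x y, g (x + y) = g x + g y & forall c x, g (c *: x) = c *: g x].
Proof.
move=> hg.
have g0 : g 0 = 0.
  have h := hg 1 0 0; rewrite scale1r addr0 scale1r in h.
  by have := congr1 (fun z => z - g 0) h; rewrite addrK subrr.
split => // [x y|c x]; first by rewrite -[x in LHS]scale1r hg scale1r.
by rewrite -[c *: x]addr0 hg g0 addr0.
Qed.

Lemma lin_sum (U V : lmodType K) (g : U -> V) (hg : linear g) (I : Type) (s : seq I) (F : I -> U) :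
  g (\sum_(i <- s) F i) = \sum_(i <- s) g (F i).
Proof.
move: hg => /lin_props [g0 gD _]; elim: s => [|i s IH]; first by rewrite !big_nil g0.
by rewrite !big_cons gD IH.
Qed.

Lemma linZ (U V : lmodType K) (g : U -> V) (hg : linear g) c x : g (c *: x) = c *: g x.
Proof. by move: hg => /lin_props [_ _ ->]. Qed.

Definition hmul (bm : tot -> tot -> tot) (x y : HT K) : HT K :=
  \sum_(u <- msupp x) \sum_(v <- msupp y) << (x@_u * y@_v) *g bm u v >>.

Lemma msupp_hb v : msupp (hb K v) = [fset v]%fset.
Proof. by rewrite /hb msuppU oner_eq0. Qed.
Lemma mcoeff_hb v : (hb K v)@_v = 1.
Proof. by rewrite /hb mcoeffUU. Qed.
Lemma hmul_single bm (x y : HT K) v w : msupp x = [fset v]%fset -> msupp y = [fset w]%fset ->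
  x@_v = 1 -> y@_w = 1 -> hmul bm x y = hb K (bm v w).
Proof. by move=> hx hy cx cy; rewrite /hmul hx hy !big_seq_fset1 cx cy mul1r. Qed.

Lemma hmul_hb bm v w : hmul bm (hb K v) (hb K w) = hb K (bm v w).
Proof. by apply: hmul_single; [exact: msupp_hb|exact: msupp_hb|exact: mcoeff_hb|exact: mcoeff_hb]. Qed.

Lemma monU (c : K) (u : tot) : << c *g u >> = c *: hb K u :> HT K.
Proof. by apply/malgP => k; rewrite mcoeffZ /hb !mcoeffU mulr_natr. Qed.

Section Phi.
Variable (A : lmodType K) (f : tot -> A).

Definition phi (x : HT K) : A := \sum_(u <- msupp x) x@_u *: f u.

Lemma phiEw (d : {fset tot}) x : (msupp x `<=` d)%fset -> phi x = \sum_(u <- d) x@_u *: f u.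
Proof.
move=> le; rewrite /phi [LHS](big_fset_incl _ le) //= => u _ /mcoeff_outdom ->.
by rewrite scale0r.
Qed.

Lemma phi_lin : linear phi.
Proof.
move=> c x y; set d := (msupp x `|` msupp y `|` msupp (c *: x + y))%fset.
rewrite (@phiEw d (c *: x + y)) ?(@phiEw d x) ?(@phiEw d y); first last.
- by apply/fsubsetP => z hz; rewrite !inE hz ?orbT.
- by apply/fsubsetP => z hz; rewrite !inE hz ?orbT.
- by apply/fsubsetP => z hz; rewrite !inE hz ?orbT.
rewrite scaler_sumr -big_split; apply: eq_bigr => u _.
by rewrite mcoeffD mcoeffZ scalerDl scalerA.
Qed.

Lemma phiU c w : phi << c *g w >> = c *: f w.
Proof. by rewrite (@phiEw [fset w]%fset) ?msuppU_le // big_seq_fset1 mcoeffUU. Qed.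

Lemma phi_hb w : phi (hb K w) = f w.
Proof. by rewrite /hb phiU scale1r. Qed.

Lemma phi_hmul bm (mA : A -> A -> A) :
  (forall x, linear (mA x)) -> (forall y, linear (mA^~ y)) ->
  (forall u v, f (bm u v) = mA (f u) (f v)) ->
  forall x y, phi (hmul bm x y) = mA (phi x) (phi y).
Proof.
move=> hl1 hl2 hm x y; rewrite /hmul (lin_sum phi_lin).
rewrite [in RHS]/phi (lin_sum (hl2 _)); apply: eq_bigr => u _.
rewrite (lin_sum phi_lin) (linZ (hl2 _)) /phi (lin_sum (hl1 _)) scaler_sumr.
apply: eq_bigr => v _.
by rewrite -/(phi _) phiU (linZ (hl1 _)) hm scalerA.
Qed.

Lemma phi_unique (psi : HT K -> A) : linear psi -> (forall u, psi (hb K u) = f u) ->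
  forall x, psi x = phi x.
Proof.
move=> hl hbf x; rewrite {1}(monalgE x) (lin_sum hl) /phi; apply: eq_bigr => u _.
by rewrite monU (linZ hl) hbf.
Qed.
End Phi.
End Lin.

Local Close Scope ring_scope.


Section Free1.
Variables (K : fieldType) (A : lmodType K) (mA : A -> A -> A) (e : A) (bm : tot -> tot -> tot).
Hypothesis bm1u : forall u, bm tunit u = u.
Hypothesis bmu1 : forall u, bm u tunit = u.
Hypothesis bmA : forall u v w, bm (bm u v) w = bm u (bm v w).
Hypothesis tag_bm : forall u v, tag (bm u v) = tag u + tag v.
Hypothesis hfirst : forall v w v' w', bm v w = bm v' w' -> Ind bm v -> Ind bm v' -> v = v' /\ w = w'.
Hypothesis hl1 : forall x, linear (mA x).
Hypothesis hl2 : forall y, linear (mA^~ y).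
Hypothesis mA1x : forall x, mA e x = x.
Hypothesis mAx1 : forall x, mA x e = x.
Hypothesis mAA : forall x y z, mA (mA x y) z = mA x (mA y z).

Lemma free1 (a : tot -> A) : exists phi : HT K -> A,
  (unital_morph (hmul bm) mA e phi /\ on_gens (Ind bm) a phi) /\
  forall psi : HT K -> A, unital_morph (hmul bm) mA e psi /\ on_gens (Ind bm) a psi ->
    forall x, psi x = phi x.
Proof.
pose D1 := fun u v w => Ind bm v /\ w <> tunit /\ u = bm v w.
pose D2 := fun (u v w : tot) => False.
have dec1 : forall u v w, D1 u v w -> tag v < tag u /\ tag w < tag u.
  move=> u v w [hv [hw ->]]; rewrite tag_bm.
  by have := tag_gt0 hv.1; have := tag_gt0 hw; split; lia.
have dec2 : forall u v w, D2 u v w -> tag v < tag u /\ tag w < tag u by [].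
have uniq1 : forall u v w v' w', D1 u v w -> D1 u v' w' -> v = v' /\ w = w'.
  by move=> u v w v' w' [h1 [_ ->]] [h2 [_ e2]]; apply: hfirst.
have uniq2 : forall u v w v' w', D2 u v w -> D2 u v' w' -> v = v' /\ w = w' by [].
have excl : forall u v w v' w', D1 u v w -> D2 u v' w' -> False by [].
have [f1 fD1 _ fgen] := gf_spec e mA mA a dec1 dec2 uniq1 uniq2 excl.
set f := gf e mA mA a D1 D2 in f1 fD1 fgen *.
have fmul : forall x y, f (bm x y) = mA (f x) (f y).
  apply: f_mult => // v w hv hw; apply: fD1; by split.
have fg : forall u, Ind bm u -> f u = a u.
  move=> u hu; apply: fgen => //; first exact: hu.1.
    by move=> v w [hv [hw eu]]; apply: hu.2; exists v, w; split; [exact: hv.1|split].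
  by move=> v w [].
exists (phi f); split.
  split; last by move=> u hu; rewrite phi_hb fg.
  rewrite /unital_morph; split; first exact: phi_lin.
    by rewrite /hunit phi_hb.
  by apply: phi_hmul.
move=> psi [[hl h1 hm] hg]; apply: phi_unique => //.
apply: strong_tag => u IH.
have [->|hu] := classic (u = tunit).
  have h1' : psi (hb K tunit) = e by exact: h1.
  by rewrite h1' f1.
have [hI|hI] := classic (Ind bm u).
  by rewrite (hg u hI) (fg u hI).
have [v [w [hv [hw eu]]]] := first_factor bmA tag_bm hu hI.
have [tv tw] := dec1 _ _ _ (conj hv (conj hw eu)).
rewrite eu -hmul_hb hm (fD1 (bm v w) v w (conj hv (conj hw erefl))).
by congr (mA _ _); [exact: IH|exact: IH].
Qed.
End Free1.

Section Free2.
Variables (K : fieldType) (A : lmodType K) (m1 m2 : A -> A -> A) (e : A).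
Hypothesis hA : two_assoc m1 m2 e.

Lemma free2 (a : tot -> A) : exists phi : HT K -> A,
  (unital_morph (hmul bconc) m1 e phi /\ unital_morph (hmul bdown) m2 e phi /\
   on_gens bi_indecomposable a phi) /\
  forall psi : HT K -> A,
    unital_morph (hmul bconc) m1 e psi /\ unital_morph (hmul bdown) m2 e psi /\
    on_gens bi_indecomposable a psi -> forall x, psi x = phi x.
Proof.
case: hA => [[l11 l12] [l21 l22] [a1 a2] [u1l u1r] [u2l u2r]].
pose D1 := fun u v w => Ind bconc v /\ w <> tunit /\ u = bconc v w.
pose D2 := fun u v w => Ind bdown v /\ w <> tunit /\ u = bdown v w.
have dec1 : forall u v w, D1 u v w -> tag v < tag u /\ tag w < tag u.
  move=> u v w [hv [hw ->]]; rewrite tag_conc.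
  by have := tag_gt0 hv.1; have := tag_gt0 hw; split; lia.
have dec2 : forall u v w, D2 u v w -> tag v < tag u /\ tag w < tag u.
  move=> u v w [hv [hw ->]]; rewrite tag_down.
  by have := tag_gt0 hv.1; have := tag_gt0 hw; split; lia.
have uniq1 : forall u v w v' w', D1 u v w -> D1 u v' w' -> v = v' /\ w = w'.
  by move=> u v w v' w' [h1 [_ ->]] [h2 [_ e2]]; apply: conc_first.
have uniq2 : forall u v w v' w', D2 u v w -> D2 u v' w' -> v = v' /\ w = w'.
  by move=> u v w v' w' [h1 [_ ->]] [h2 [_ e2]]; apply: down_first.
have excl : forall u v w v' w', D1 u v w -> D2 u v' w' -> False.
  move=> u v w v' w' [h1 [h2 ->]] [h3 [h4 e2]].
  exact: (conc_down_excl e2 h1.1 h2 h3.1 h4).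
have [f1 fD1 fD2 fgen] := gf_spec e m1 m2 a dec1 dec2 uniq1 uniq2 excl.
set f := gf e m1 m2 a D1 D2 in f1 fD1 fD2 fgen *.
have fmul1 : forall x y, f (bconc x y) = m1 (f x) (f y).
  apply: f_mult => //; [exact: conc1u|exact: concu1|exact: concA|].
  move=> v w hv hw; apply: fD1; by split.
have fmul2 : forall x y, f (bdown x y) = m2 (f x) (f y).
  apply: f_mult => //; [exact: down1u|exact: downu1|exact: downA|].
  move=> v w hv hw; apply: fD2; by split.
have fg : forall u, bi_indecomposable u -> f u = a u.
  move=> u [hu hu']; apply: fgen => //; first exact: hu.1.
    by move=> v w [hv [hw eu]]; apply: hu.2; exists v, w; split; [exact: hv.1|split].
  by move=> v w [hv [hw eu]]; apply: hu'.2; exists v, w; split; [exact: hv.1|split].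
exists (phi f); split.
  split; [|split]; last by move=> u hu; rewrite phi_hb fg.
    rewrite /unital_morph; split; first exact: phi_lin.
      by rewrite /hunit phi_hb.
    by apply: phi_hmul.
  rewrite /unital_morph; split; first exact: phi_lin.
    by rewrite /hunit phi_hb.
  by apply: phi_hmul.
move=> psi [[hl h1 hm1] [[_ _ hm2] hg]]; apply: phi_unique => //.
apply: strong_tag => u IH.
have [->|hu] := classic (u = tunit).
  have h1' : psi (hb K tunit) = e by exact: h1.
  by rewrite h1' f1.
have [hI|hI] := classic (Ind bconc u); last first.
  have [v [w [hv [hw eu]]]] := first_factor concA (fun _ _ => erefl) hu hI.
  have [tv tw] := dec1 _ _ _ (conj hv (conj hw eu)).
  rewrite eu -hmul_hb hm1 (fD1 (bconc v w) v w (conj hv (conj hw erefl))).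
  by congr (m1 _ _); [exact: IH|exact: IH].
have [hJ|hJ] := classic (Ind bdown u); last first.
  have [v [w [hv [hw eu]]]] := first_factor downA (fun _ _ => erefl) hu hJ.
  have [tv tw] := dec2 _ _ _ (conj hv (conj hw eu)).
  rewrite eu -hmul_hb hm2 (fD2 (bdown v w) v w (conj hv (conj hw erefl))).
  by congr (m2 _ _); [exact: IH|exact: IH].
have hb2 : bi_indecomposable u by split.
by rewrite (hg u hb2) (fg u hb2).
Qed.
End Free2.

Local Open Scope ring_scope.
Import GRing.Theory.

Lemma alg_two_assoc (K : fieldType) (A : algType K) : two_assoc (@GRing.mul A) (@GRing.mul A) 1.
Proof.
have l1 : forall x : A, linear (GRing.mul x).
  by move=> x c u v; rewrite mulrDr scalerAr.
have l2 : forall y : A, linear (fun x : A => x * y).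
  by move=> y c u v; rewrite mulrDl scalerAl.
by split; split; [exact: l1|exact: l2|exact: l1|exact: l2|exact: mulrA|exact: mulrA
  |exact: mul1r|exact: mulr1|exact: mul1r|exact: mulr1].
Qed.

Unset Implicit Arguments.

Theorem proposition5 (K : fieldType) :
  (* (1) (H_T, .) is the free unital associative algebra on the indecomposables *)
  (forall (A : algType K) (a : tot -> A),
     exists phi : HT K -> A,
       (unital_morph (@hconc K) *%R 1 phi /\ on_gens indecomposable a phi) /\
       forall psi : HT K -> A,
         unital_morph (@hconc K) *%R 1 psi /\ on_gens indecomposable a psi ->
         forall x, psi x = phi x) /\
  (* (2) (H_T, down) is the free unital associative algebra on the
         down-indecomposables *)
  (forall (A : algType K) (a : tot -> A),
     exists phi : HT K -> A,
       (unital_morph (@hdown K) *%R 1 phi /\ on_gens down_indecomposable a phi) /\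
       forall psi : HT K -> A,
         unital_morph (@hdown K) *%R 1 psi /\ on_gens down_indecomposable a psi ->
         forall x, psi x = phi x) /\
  (* (3) (H_T, ., down) is the free 2-associative algebra on the
         bi-indecomposables *)
  (forall (A : lmodType K) (m1 m2 : A -> A -> A) (e : A),
     two_assoc m1 m2 e ->
     forall a : tot -> A,
     exists phi : HT K -> A,
       (unital_morph (@hconc K) m1 e phi /\ unital_morph (@hdown K) m2 e phi /\
        on_gens bi_indecomposable a phi) /\
       forall psi : HT K -> A,
         unital_morph (@hconc K) m1 e psi /\ unital_morph (@hdown K) m2 e psi /\
         on_gens bi_indecomposable a psi ->
         forall x, psi x = phi x).
Proof.
split; [|split].
- move=> A a; have [[l11 l12] _ [aa _] [u1 u2] _] := alg_two_assoc A.
  exact: (free1 conc1u concu1 concA (fun _ _ => erefl) conc_first l11 l12 u1 u2 (fun x y z => esym (aa x y z)) a).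
- move=> A a; have [[l11 l12] _ [aa _] [u1 u2] _] := alg_two_assoc A.
  exact: (free1 down1u downu1 downA (fun _ _ => erefl) down_first l11 l12 u1 u2 (fun x y z => esym (aa x y z)) a).
- move=> A m1 m2 e hA a; exact: (free2 hA a).
Qed.
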